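(* Let $E$ be a set of equivariance equations (equations $t\approx s$ between nominal terms) of total size $n$ and let $\nabla$ be a freshness context of size $m$. Then the algorithm $\mathfrak E$, run on $E;\nabla;\mathrm{Atoms}(E);\mathit{Id}$ until no rule applies, has $O(n^2+m)$ time complexity, assuming permutations are represented by a pair of hash tables (for the permutation and its inverse) and membership in the atom set and in $\nabla$ by hash tables, all with constant-time lookup and update.
   Context: Nominal terms $t::=f(t_1,\dots,t_n)\mid a\mid a.t\mid \pi\cdot X$ over sorted atoms, variables and function symbols; $\pi$ is a permutation (finite sequence of swappings $(a\,b)$ of same-sorted atoms; $\mathit{Id}$ the empty one); $\pi\bullet t$ is the swapping action ($(a\,b)$ exchanges $a,b$ everywhere, $(a\,b)\bullet(\pi\cdot X)=((a\,b)\pi)\cdot X$, sequences act right to left). The size of a term is the number of occurrences of atoms, variables and function symbols in it (the size of $E$ is the sum over its equations); $\mathrm{Atoms}(E)$ is the set of atoms occurring in $E$. A freshness context is a finite set of constraints $a\# X$. Algorithm $\mathfrak E$ works on states $E;\nabla;A;\pi$ with rules ($\uplus$ disjoint union): Dec-E: $\{f(t_1,..,t_m)\approx f(s_1,..,s_m)\}\uplus E;\nabla;A;\mathit{Id}\Rightarrow\{t_1\approx s_1,..,t_m\approx s_m\}\cup E;\nabla;A;\mathit{Id}$. Alp-E: $\{a.t\approx b.s\}\uplus E;\nabla;A;\mathit{Id}\Rightarrow\{(\bar c\,a)\bullet t\approx(\bar c\,b)\bullet s\}\cup E;\nabla;A;\mathit{Id}$, $\bar c$ a fresh atom (not in $A$,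 not occurring so far) of the sort of $a,b$. Sus-E: $\{\pi_1\cdot X\approx\pi_2\cdot X\}\uplus E;\nabla;A;\mathit{Id}\Rightarrow\{\pi_1\bullet a\approx\pi_2\bullet a\mid a\in A,\ a\# X\notin\nabla\}\cup E;\nabla;A;\mathit{Id}$. Rem-E: $\{a\approx b\}\uplus E;\nabla;A;\pi\Rightarrow E;\nabla;A\setminus\{b\};\pi$, for atoms with $\pi\bullet a=b$. Sol-E: $\{a\approx b\}\uplus E;\nabla;A;\pi\Rightarrow E;\nabla;A\setminus\{b\};(\pi\bullet a\;\,b)\pi$, for atoms with $\pi\bullet a\in A$, $b\in A$, $\pi\bullet a\neq b$. *)

(* Defs.v *)
From mathcomp Require Import all_boot.
Set Implicit Arguments. Unset Strict Implicit. Unset Printing Implicit Defensive.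

(** Sorted atoms: an atom is a pair (sort, name); infinitely many atoms per sort. *)
Definition atom := (nat * nat)%type.
Definition asort (a : atom) : nat := a.1.

(** A permutation is a finite sequence of swappings; [[:: s1; ...; sk]]
    denotes s1 ∘ ... ∘ sk (acting right to left).  [Id] is [[::]]. *)
Definition perm := seq (atom * atom).

Definition swap_atom (s : atom * atom) (c : atom) : atom :=
  if c == s.1 then s.2 else if c == s.2 then s.1 else c.

Definition pact (p : perm) (c : atom) : atom := foldr swap_atom c p.

Definition is_id (p : perm) : Prop := forall c, pact p c = c.

(** variables and function symbols are named by nats *)
Inductive term : Type :=
| Fn  of nat & seq term
| At  of atom
| Abs of atom & term
| Sus of perm & nat.

Fixpoint tact (p : perm) (t : term) : term :=
  match t with
  | Fn f ts => Fn f (map (tact p) ts)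
  | At a => At (pact p a)
  | Abs a u => Abs (pact p a) (tact p u)
  | Sus q X => Sus (p ++ q) X
  end.

(** size = number of occurrences of atoms (including those in permutations),
    variables and function symbols *)
Fixpoint tsize (t : term) : nat :=
  match t with
  | Fn _ ts => 1 + sumn (map tsize ts)
  | At _ => 1
  | Abs _ u => 1 + tsize u
  | Sus q X => 2 * size q + 1
  end.

(** number of syntax-tree nodes (invariant under swapping); used as the cost
    of traversing a term *)
Fixpoint tnodes (t : term) : nat :=
  match t with
  | Fn _ ts => 1 + sumn (map tnodes ts)
  | At _ => 1
  | Abs _ u => 1 + tnodes u
  | Sus _ _ => 1
  end.

Fixpoint tatoms (t : term) : seq atom :=
  match t with
  | Fn _ ts => flatten (map tatoms ts)
  | At a => [:: a]
  | Abs a u => a :: tatoms u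
  | Sus q X => flatten (map (fun s => [:: s.1; s.2]) q)
  end.

Definition equation := (term * term)%type.
Definition eqs_size (E : seq equation) : nat := sumn (map (fun e => tsize e.1 + tsize e.2) E).
Definition eqs_atoms (E : seq equation) : seq atom :=
  flatten (map (fun e => tatoms e.1 ++ tatoms e.2) E).

(** freshness context: a list of constraints a # X *)
Definition fctx := seq (atom * nat).

(** states E ; nabla ; A ; pi  (E is handled as a multiset / worklist) *)
Record state := St { st_E : seq equation; st_nabla : fctx; st_A : seq atom; st_pi : perm }.

Definition perm_atoms (p : perm) : seq atom := flatten (map (fun s => [:: s.1; s.2]) p).

Definition state_atoms (s : state) : seq atom :=
  eqs_atoms (st_E s) ++ map fst (st_nabla s) ++ st_A s ++ perm_atoms (st_pi s).

Definition remove_atom (A : seq atom) (b : atom) : seq atom := [seq x <- A | x != b].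

(** [step used s s' k]: one rule application from [s] to [s'] costing [k]
    elementary operations in the stated cost model (permutations, the atom set
    A and nabla stored in constant-time hash tables).  [used] is the set of
    atoms that occurred so far in the run (for the freshness side condition of
    Alp-E).  Costs:
    - Dec-E : 1 + m (remove the equation, push the m new ones);
    - Alp-E : 1 + traversal of t and s (each swapping of an atom or of the
              permutation of a suspension is O(1) on the hash tables);
    - Sus-E : 1 + |A| (one O(1) lookup in nabla and two O(1) permutation
              lookups per atom of A);
    - Rem-E, Sol-E : 1 (lookups/updates in hash tables). *)
Inductive step (used : seq atom) : state -> state -> nat -> Prop :=
| DecE E1 E2 nabla A p f ts ss :
    is_id p -> size ts = size ss ->
    step used (St (E1 ++ (Fn f ts, Fn f ss) :: E2) nabla A p)
              (St (zip ts ss ++ E1 ++ E2) nabla A p) (1 + size ts)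
| AlpE E1 E2 nabla A p a b t s c :
    is_id p -> asort a = asort b -> asort c = asort a ->
    c \notin A -> c \notin used ->
    step used (St (E1 ++ (Abs a t, Abs b s) :: E2) nabla A p)
              (St ((tact [:: (c, a)] t, tact [:: (c, b)] s) :: E1 ++ E2) nabla A p)
              (1 + tnodes t + tnodes s)
| SusE E1 E2 nabla A p p1 p2 X :
    is_id p ->
    step used (St (E1 ++ (Sus p1 X, Sus p2 X) :: E2) nabla A p)
              (St ([seq (At (pact p1 a), At (pact p2 a)) | a <- A & (a, X) \notin nabla]
                   ++ E1 ++ E2) nabla A p)
              (1 + size A)
| RemE E1 E2 nabla A p a b :
    pact p a = b ->
    step used (St (E1 ++ (At a, At b) :: E2) nabla A p)
              (St (E1 ++ E2) nabla (remove_atom A b) p) 1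
| SolE E1 E2 nabla A p a b :
    pact p a \in A -> b \in A -> pact p a != b ->
    step used (St (E1 ++ (At a, At b) :: E2) nabla A p)
              (St (E1 ++ E2) nabla (remove_atom A b) ((pact p a, b) :: p)) 1.

Inductive derivation : seq atom -> state -> nat -> Prop :=
| Deriv_nil used s : derivation used s 0
| Deriv_cons used s s' k c :
    step used s s' k -> derivation (used ++ state_atoms s') s' c ->
    derivation used s (k + c).

Definition init_state (E : seq equation) (nabla : fctx) : state :=
  St E nabla (undup (eqs_atoms E)) [::].

(* Main.v *)
Require Import Defs.
From mathcomp Require Import all_boot.
From mathcomp Require Import zify.

Definition term_ind2 (P : term -> Prop)
  (HF : forall f ts, foldr (fun t acc => P t /\ acc) True ts -> P (Fn f ts))
  (HA : forall a, P (At a)) (HB : forall a u, P u -> P (Abs a u))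
  (HS : forall q X, P (Sus q X)) : forall t, P t :=
  fix F t := match t return P t with
  | Fn f ts => HF f ts ((fix G ts := match ts return foldr (fun t acc => P t /\ acc) True ts with
                         | [::] => I | t :: ts' => conj (F t) (G ts') end) ts)
  | At a => HA a
  | Abs a u => HB a u (F u)
  | Sus q X => HS q X
  end.

Definition w (n : nat) := fix w (t : term) : nat :=
  match t with
  | Fn _ ts => 1 + size ts + sumn (map w ts)
  | At _ => 1
  | Abs _ u => 1 + tnodes u + w u
  | Sus _ _ => 2 * n + 2
  end.

Definition ew n (e : equation) := w n e.1 + w n e.2.
Definition Phi n (E : seq equation) := sumn (map (ew n) E).

Lemma tact_nodes p t : tnodes (tact p t) = tnodes t.
Proof.
elim/term_ind2: t => //= [f ts IH|a u ->] //.
congr (1 + _); elim: ts IH => //= t ts IHts [-> /IHts ->] //.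
Qed.

Lemma tact_w n p t : w n (tact p t) = w n t.
Proof.
elim/term_ind2: t => //= [f ts IH|a u ->]; last by rewrite tact_nodes.
rewrite size_map; congr (1 + _ + _); elim: ts IH => //= t ts IHts [-> /IHts ->] //.
Qed.

Lemma tnodes_pos t : 0 < tnodes t.
Proof. by case: t. Qed.

Lemma w_bound n t : w n t <= (2 * n + 3 + tnodes t) * tnodes t.
Proof.
elim/term_ind2: t => /= [f ts IH|a|a u IH|q X]; try nia.
have : size ts <= sumn (map tnodes ts) /\
       sumn (map (w n) ts) <= (2 * n + 3 + sumn (map tnodes ts)) * sumn (map tnodes ts).
  elim: ts IH => //= t ts IHts [H1 /IHts [H2 H3]].
  have := tnodes_pos t. nia.
nia.
Qed.

Lemma nodes_size t : tnodes t <= Defs.tsize t.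
Proof.
elim/term_ind2: t => [f ts IH|a|a u IH|q X] /=; try lia.
suff : sumn (map tnodes ts) <= sumn (map Defs.tsize ts) by lia.
elim: ts IH => //= t ts IHts [H1 /IHts H2]. lia.
Qed.

Lemma atoms_size t : size (tatoms t) <= Defs.tsize t.
Proof.
elim/term_ind2: t => [f ts IH|a|a u IH|q X] /=; try lia.
- suff : size (flatten (map tatoms ts)) <= sumn (map Defs.tsize ts) by lia.
  elim: ts IH => //= t ts IHts [H1 /IHts H2]. rewrite size_cat. lia.
- suff : size (flatten [seq [:: s.1; s.2] | s <- q]) = 2 * size q by lia.
  elim: q => //= s q ->. lia.
Qed.

Lemma Phi_cat n E1 E2 : Phi n (E1 ++ E2) = Phi n E1 + Phi n E2.
Proof. by rewrite /Phi map_cat sumn_cat. Qed.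

Lemma Phi_cons n e E : Phi n (e :: E) = ew n e + Phi n E.
Proof. by []. Qed.

Lemma Phi_zip n ts ss : size ts = size ss ->
  Phi n (zip ts ss) = sumn (map (w n) ts) + sumn (map (w n) ss).
Proof.
elim: ts ss => [|t ts IH] [|s ss] //= [/IH]; rewrite Phi_cons /ew /= => ->. lia.
Qed.

Lemma Phi_map n (L : seq atom) f g :
  Phi n [seq (At (f a), At (g a)) | a <- L] = 2 * size L.
Proof. elim: L => //= a L IH. rewrite Phi_cons IH /ew /=. lia. Qed.

Lemma Phi_sus n (A : seq atom) (P : pred atom) f g :
  Phi n [seq (At (f a), At (g a)) | a <- A & P a] <= 2 * size A.
Proof.
rewrite Phi_map size_filter leq_mul2l count_size orbT //.
Qed.

Lemma step_dec n used s s' k : step used s s' k -> size (st_A s) <= n ->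
  k + Phi n (st_E s') <= Phi n (st_E s) /\ size (st_A s') <= n.
Proof.
case=> {s s' k} /=.
- move=> E1 E2 nabla A p f ts ss _ Hs HA; split => //.
  rewrite !Phi_cat Phi_cons Phi_zip // /ew /=. lia.
- move=> E1 E2 nabla A p a b t s c _ _ _ _ _ HA; split => //.
  rewrite !Phi_cons !Phi_cat !Phi_cons /ew /= !tact_w. lia.
- move=> E1 E2 nabla A p p1 p2 X _ HA; split => //.
  rewrite !Phi_cat Phi_cons Phi_map size_filter /ew /=.
  set k := count _ A; have : k <= size A by exact: count_size. lia.
- move=> E1 E2 nabla A p a b _ HA; split.
  + rewrite !Phi_cat Phi_cons /ew /=. lia.
  + rewrite /remove_atom size_filter; exact: leq_trans (count_size _ _) HA.
- move=> E1 E2 nabla A p a b _ _ _ HA; split.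
  + rewrite !Phi_cat Phi_cons /ew /=. lia.
  + rewrite /remove_atom size_filter; exact: leq_trans (count_size _ _) HA.
Qed.

Lemma deriv_bound n used s c : derivation used s c -> size (st_A s) <= n ->
  c <= Phi n (st_E s).
Proof.
elim=> {used s c} // used s s' k c Hst _ IH HA.
have [H1 H2] := @step_dec n _ _ _ _ Hst HA.
have := IH H2. lia.
Qed.

Lemma Phi_init n E : Phi n E <= (2 * n + 3 + eqs_size E) * eqs_size E.
Proof.
have HN : sumn (map (fun e => tnodes e.1 + tnodes e.2) E) <= eqs_size E.
  rewrite /eqs_size; elim: E => //= e E IH.
  have := nodes_size e.1; have := nodes_size e.2. lia.
suff : Phi n E <= (2 * n + 3 + sumn (map (fun e => tnodes e.1 + tnodes e.2) E))
                   * sumn (map (fun e => tnodes e.1 + tnodes e.2) E) by nia.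
elim: E {HN} => //= e E IH. rewrite Phi_cons /ew.
have := w_bound n e.1; have := w_bound n e.2. nia.
Qed.

Lemma atoms_init E : size (undup (eqs_atoms E)) <= eqs_size E.
Proof.
apply: leq_trans (size_undup _) _.
rewrite /eqs_atoms /eqs_size; elim: E => //= e E IH.
rewrite !size_cat. have := atoms_size e.1; have := atoms_size e.2. move=> H2 H1; exact: leq_add (leq_add H1 H2) IH.
Qed.

Theorem theorem8 :
  exists C : nat, forall (E : seq equation) (nabla : fctx) (c : nat),
    derivation (state_atoms (init_state E nabla)) (init_state E nabla) c ->
    eqs_size E + size nabla + c <= C * ((eqs_size E) ^ 2 + size nabla + 1).
Proof.
exists 7 => E nabla c Hd.
have := @deriv_bound (eqs_size E) _ _ _ Hd (atoms_init E).
have := Phi_init (eqs_size E) E. rewrite /init_state /=. nia.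
Qed.
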